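(* Let $p$ be a prime and let $k\in\mathbb{Q}_p$ with $|k|_p>1$. For a vertex $v$ of the branch $T_{\mathbb{Z}_p}$ (described in the context) at depth $\ell$, define $$\phi(v)=\frac{p}{p+1}\int_{\mathbb{Z}_p} d\mu(x)\, e^{2\pi i\{kx\}}\, p^{-d_C(x,v)},$$ where $d\mu$ is the Haar measure on $\mathbb{Q}_p$ normalized by $\mu(\mathbb{Z}_p)=1$. If $0\le \ell< -\operatorname{ord}_p(k)-2$, then $\phi(v)=0$.
   Context: For $x\in\mathbb{Q}_p$, $\operatorname{ord}_p(x)$ is the $p$-adic valuation and $|x|_p=p^{-\operatorname{ord}_p(x)}$. The fractional part $\{\cdot\}:\mathbb{Q}_p\to\mathbb{Q}$ is defined by $\{\sum_{j=m}^\infty a_jp^j\}=\sum_{j=m}^{-1}a_jp^j$ (digits $a_j\in\{0,\dots,p-1\}$), interpreted as a rational number and equal to $0$ if $m\ge 0$. The Bruhat--Tits tree $T_p$ of $\mathbb{Q}_p$ is the $(p+1)$-regular tree whose space of ends is $\mathbb{P}^1(\mathbb{Q}_p)$. Fix the centerpoint $C$ to be the vertex below which the boundary ends form $\mathbb{Z}_p$. The branch $T_{\mathbb{Z}_p}$ below $C$ is described as follows: its vertices at depth $n\ge 0$ (distance $n$ from $C$) are the balls $a+p^n\mathbb{Z}_p$ with $a\in\mathbb{Z}_p$ (so $C=\mathbb{Z}_p$ is at depth $0$), each depth-$n$ ball being joined by an edge to the $p$ balls of radius $p^{-n-1}$ it contains; a boundary point $x\in\mathbb{Z}_p$ is the end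 given by the nested sequence of balls containing $x$. For $x\in\mathbb{Z}_p$ and a vertex $v$ at depth $\ell$ of this branch, let $j\le \ell$ be the largest depth such that $x$ lies in the ball of the ancestor of $v$ at depth $j$ (so $j=\ell$ iff $x\in v$). The regularized distance (the graph distance from $v$ to the end $x$, renormalized so that it vanishes at $v=C$) is $d_C(x,v)=(\ell-j)-j=\ell-2j$. *)

(* Defs.v *)
From Stdlib Require Import Reals ZArith Arith Lia.
From Coquelicot Require Import Coquelicot.
Open Scope R_scope.

(** p-adic integers, as the projective limit of Z/p^n Z:
    a sequence x with x n in {0,..,p^n-1} and x (n+1) = x n mod p^n.
    x n is the residue of x modulo p^n. *)
Definition is_Zp (p : nat) (x : nat -> nat) : Prop :=
  forall n, (x n < p ^ n)%nat /\ (x (S n) mod p ^ n = x n)%nat.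

Definition embedZp (p a : nat) : nat -> nat := fun n => (a mod p ^ n)%nat.

(** Elements of Q_p are written k = p^(-e) * z with e : nat and z in Z_p.
    ord_p(z) = o for z <> 0 in Z_p means z = 0 mod p^o but not mod p^(o+1). *)
Definition ordZp_is (p : nat) (z : nat -> nat) (o : nat) : Prop :=
  z o = 0%nat /\ z (S o) <> 0%nat.

(** ord_p(p^(-e) z) = ord_p(z) - e. *)
Definition ordQp_of (o e : nat) : Z := (Z.of_nat o - Z.of_nat e)%Z.

Definition absp (p : nat) (ordk : Z) : R := powerRZ (INR p) (- ordk).

(** Fractional part {k x} for k = p^(-e) z and x in Z_p:
    k x = p^(-e) (z x), and {p^(-e) w} = (w mod p^e) / p^e. *)
Definition frac_kx (p e : nat) (z x : nat -> nat) : R :=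
  INR ((z e * x e) mod p ^ e) / INR (p ^ e).

Definition cexp2pi (t : R) : C := (cos (2 * PI * t), sin (2 * PI * t)).

(** Vertex of the branch T_{Z_p} at depth l: the ball a + p^l Z_p, a < p^l.
    x lies in the ancestor at depth j iff x j = a mod p^j.
    [meet_depth p x a l] is the largest j <= l with x in the depth-j ancestor. *)
Fixpoint meet_depth (p : nat) (x : nat -> nat) (a : nat) (l : nat) : nat :=
  match l with
  | O => O
  | S m => if Nat.eqb (x (S m)) (a mod p ^ (S m)) then S m
           else meet_depth p x a m
  end.

Definition dC (p : nat) (x : nat -> nat) (a l : nat) : Z :=
  (Z.of_nat l - 2 * Z.of_nat (meet_depth p x a l))%Z.

(** Haar integral over Z_p (mu(Z_p) = 1) of a continuous f : Z_p -> C, as the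
    limit of the Riemann sums p^(-N) * sum_{a < p^N} f(a)
    (real and imaginary parts separately). *)
Definition riemann_sum (p : nat) (f : (nat -> nat) -> C) (N : nat) : C :=
  Cmult (RtoC (/ INR (p ^ N)))
        (sum_n (fun a => f (embedZp p a)) (p ^ N - 1)%nat).

Definition haar_int_Zp (p : nat) (f : (nat -> nat) -> C) : C :=
  (real (Lim_seq (fun N => Re (riemann_sum p f N))),
   real (Lim_seq (fun N => Im (riemann_sum p f N)))).

Definition phi (p e : nat) (z : nat -> nat) (a l : nat) : C :=
  Cmult (RtoC (INR p / INR (p + 1)))
    (haar_int_Zp p (fun x =>
       Cmult (cexp2pi (frac_kx p e z x))
             (RtoC (powerRZ (INR p) (- dC p x a l))))).

(* Main.v *)
Require Import Defs.
From Stdlib Require Import Reals ZArith Arith Znumtheory Lia Lra.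
From Coquelicot Require Import Coquelicot.
Open Scope R_scope.

Fixpoint csum (n : nat) (g : nat -> C) : C :=
  match n with O => RtoC 0 | S n => Cplus (csum n g) (g n) end.

Lemma csum_ext n f g : (forall i, (i < n)%nat -> f i = g i) -> csum n f = csum n g.
Proof. induction n; intros H; simpl; auto. rewrite IHn, H; auto. Qed.

Lemma csum_plus n f g : csum n (fun i => Cplus (f i) (g i)) = Cplus (csum n f) (csum n g).
Proof. induction n; simpl. ring. rewrite IHn; ring. Qed.

Lemma csum_scal n c f : csum n (fun i => Cmult c (f i)) = Cmult c (csum n f).
Proof. induction n; simpl. ring. rewrite IHn; ring. Qed.

Lemma csum_zero n f : (forall i, (i < n)%nat -> f i = RtoC 0) -> csum n f = RtoC 0.
Proof. induction n; intros H; simpl; auto. rewrite IHn, H; auto. ring. Qed.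

Lemma csum_app m n g : csum (m + n) g = Cplus (csum m g) (csum n (fun i => g (m + i)%nat)).
Proof. induction n; simpl. rewrite Nat.add_0_r; ring. rewrite Nat.add_succ_r; simpl. rewrite IHn; ring. Qed.

Lemma csum_block A B g :
  csum (A * B) g = csum A (fun c => csum B (fun t => g (c + A * t)%nat)).
Proof.
  induction B; simpl.
  - rewrite Nat.mul_0_r; simpl. symmetry; apply csum_zero; auto.
  - rewrite Nat.mul_succ_r, csum_app, IHB, csum_plus. f_equal.
    apply csum_ext; intros; f_equal; lia.
Qed.

Lemma csum_shift M g : csum (S M) g = Cplus (g O) (csum M (fun t => g (S t))).
Proof. induction M; simpl. ring. simpl in IHM; rewrite IHM; ring. Qed.

Lemma sum_n_csum (g : nat -> C) n : sum_n g n = csum (S n) g.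
Proof.
  induction n.
  - rewrite sum_O; simpl. ring.
  - rewrite sum_Sn, IHn. reflexivity.
Qed.

Lemma E_add x y : cexp2pi (x + y) = Cmult (cexp2pi x) (cexp2pi y).
Proof.
  unfold cexp2pi. replace (2 * PI * (x + y)) with (2*PI*x + 2*PI*y) by ring.
  rewrite cos_plus, sin_plus. unfold Cmult; simpl. f_equal; ring.
Qed.

Lemma E_nat x k : cexp2pi (x + INR k) = cexp2pi x.
Proof.
  unfold cexp2pi. replace (2 * PI * (x + INR k)) with (2*PI*x + 2 * INR k * PI) by ring.
  rewrite cos_period, sin_period; auto.
Qed.

Lemma E_int k : cexp2pi (INR k) = RtoC 1.
Proof.
  replace (INR k) with (0 + INR k) by ring. rewrite E_nat. unfold cexp2pi.
  rewrite Rmult_0_r, cos_0, sin_0. reflexivity.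
Qed.

Lemma E_mod n q : (q <> 0)%nat ->
  cexp2pi (INR (n mod q) / INR q) = cexp2pi (INR n / INR q).
Proof.
  intros hq. assert (INR q <> 0) by (apply not_0_INR; auto).
  rewrite (Nat.div_mod n q hq) at 2.
  rewrite plus_INR, mult_INR.
  replace ((INR q * INR (n / q) + INR (n mod q)) / INR q)
    with (INR (n mod q) / INR q + INR (n/q)) by (field; auto).
  rewrite E_nat; auto.
Qed.

Lemma E_ne1 w q : (0 < w)%nat -> (w < q)%nat -> cexp2pi (INR w / INR q) <> RtoC 1.
Proof.
  intros h1 h2 H. unfold cexp2pi, RtoC in H. injection H as Hc Hs.
  set (y := PI * (INR w / INR q)).
  assert (0 < INR w) by (apply lt_0_INR; auto).
  assert (INR w < INR q) by (apply lt_INR; auto).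
  assert (0 < INR w / INR q < 1).
  { split. apply Rdiv_lt_0_compat; lra.
    apply (Rmult_lt_reg_r (INR q)); [lra|]. field_simplify; lra. }
  assert (0 < y < PI).
  { pose proof PI_RGT_0. unfold y; split; nra. }
  replace (2 * PI * (INR w / INR q)) with (2 * y) in Hc by (unfold y; ring).
  rewrite cos_2a_sin in Hc.
  pose proof (sin_gt_0 y ltac:(lra) ltac:(lra)). nra.
Qed.

Lemma geom r M : cexp2pi r <> RtoC 1 -> cexp2pi (r * INR M) = RtoC 1 ->
  csum M (fun t => cexp2pi (r * INR t)) = RtoC 0.
Proof.
  intros h1 h2.
  set (S0 := csum M (fun t => cexp2pi (r * INR t))).
  assert (Hs : Cmult S0 (cexp2pi r) = S0).
  { unfold S0. rewrite Cmult_comm, <- csum_scal.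
    assert (Heq : csum M (fun i => Cmult (cexp2pi r) (cexp2pi (r * INR i)))
             = csum M (fun t => (fun t => cexp2pi (r * INR t)) (S t))).
    { apply csum_ext; intros; rewrite <- E_add, S_INR; f_equal; ring. }
    rewrite Heq.
    pose proof (csum_shift M (fun t => cexp2pi (r * INR t))) as Hsh.
    simpl csum in Hsh. simpl in Hsh |- *.
    assert (E0 : cexp2pi (r * 0) = RtoC 1).
    { rewrite Rmult_0_r. apply (E_int 0). }
    rewrite E0 in Hsh. rewrite h2 in Hsh.
    apply (f_equal (fun u => Cminus u (RtoC 1))) in Hsh.
    replace (Cminus (Cplus (csum M (fun t => cexp2pi (r * INR t))) (RtoC 1)) (RtoC 1))
      with (csum M (fun t => cexp2pi (r * INR t))) in Hsh by ring.
    rewrite Hsh. ring. }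
  destruct (Ceq_dec S0 (RtoC 0)) as [|hn]; auto.
  exfalso. assert (Cminus (cexp2pi r) (RtoC 1) <> RtoC 0).
  { intro E. apply h1.
    replace (cexp2pi r) with (Cplus (Cminus (cexp2pi r) (RtoC 1)) (RtoC 1)) by ring.
    rewrite E. ring. }
  apply (Cmult_neq_0 S0 _ hn H).
  replace (Cmult S0 (Cminus (cexp2pi r) (RtoC 1))) with
     (Cminus (Cmult S0 (cexp2pi r)) S0) by ring.
  rewrite Hs. ring.
Qed.

Lemma meet_depth_ext p x y a l :
  (forall j, (j <= l)%nat -> x j = y j) -> meet_depth p x a l = meet_depth p y a l.
Proof.
  induction l; intros H; simpl; auto.
  rewrite H by lia. rewrite IHl; auto.
Qed.

Lemma mod_pow_block p c l t j : (p <> 0)%nat -> (j <= l)%nat ->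
  ((c + p ^ l * t) mod p ^ j = c mod p ^ j)%nat.
Proof.
  intros hp hj. replace l with ((l - j) + j)%nat by lia.
  rewrite Nat.pow_add_r.
  replace (p ^ (l - j) * p ^ j * t)%nat with ((p ^ (l - j) * t) * p ^ j)%nat by ring.
  apply Nat.Div0.mod_add.
Qed.

Lemma mod_mod_pow x p i d : ((x mod p ^ (i + d)) mod p ^ i = x mod p ^ i)%nat.
Proof.
  rewrite Nat.pow_add_r, Nat.Div0.mod_mul_r.
  rewrite Nat.mul_comm, Nat.Div0.mod_add. apply Nat.Div0.mod_mod.
Qed.

Lemma zp_mod p z i j : is_Zp p z -> (i <= j)%nat -> (z j mod p ^ i = z i)%nat.
Proof.
  intros hz hij. replace j with (i + (j - i))%nat by lia.
  generalize (j - i)%nat as d. induction d.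
  - rewrite Nat.add_0_r. apply Nat.mod_small, hz.
  - rewrite Nat.add_succ_r. destruct (hz (i + d)%nat) as [_ H].
    rewrite <- (mod_mod_pow _ p i d), H. apply IHd.
Qed.

Theorem mainTheorem1 (p : nat) (hp : prime (Z.of_nat p))
  (e : nat) (z : nat -> nat) (hz : is_Zp p z) (o : nat) (ho : ordZp_is p z o)
  (hk : absp p (ordQp_of o e) > 1)
  (l a : nat) (ha : (a < p ^ l)%nat)
  (hl : (Z.of_nat l < - ordQp_of o e - 2)%Z) :
  phi p e z a l = RtoC 0.
Proof.
  pose proof (prime_ge_2 _ hp) as hp2.
  assert (hp0 : (p <> 0)%nat) by lia.
  unfold ordQp_of in hl.
  assert (hel : (o + l + 3 <= e)%nat) by lia.
  assert (hpow : forall k, (p ^ k <> 0)%nat) by (intro; apply Nat.pow_nonzero; auto).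
  set (q := (p ^ (e - l))%nat).
  set (w := (z e mod q)%nat).
  assert (hw0 : (w <> 0)%nat).
  { intro Hw. destruct ho as [_ ho]. apply ho.
    rewrite <- (zp_mod p z (S o) e hz) by lia.
    apply Nat.Lcm0.mod_divide. apply Nat.Lcm0.mod_divide in Hw.
    eapply Nat.divide_trans; [|exact Hw]. unfold q.
    replace (e - l)%nat with (S o + (e - l - S o))%nat by lia.
    rewrite Nat.pow_add_r. apply Nat.divide_factor_l. }
  assert (hwq : (w < q)%nat) by (apply Nat.mod_upper_bound; unfold q; auto).
  set (f := fun x : nat -> nat => Cmult (cexp2pi (frac_kx p e z x))
             (RtoC (powerRZ (INR p) (- dC p x a l)))).
  assert (Hsum : forall N, (e <= N)%nat -> riemann_sum p f N = RtoC 0).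
  { intros N hN. unfold riemann_sum.
    rewrite sum_n_csum.
    replace (S (p ^ N - 1)) with (p ^ l * p ^ (N - l))%nat.
    2:{ rewrite <- Nat.pow_add_r. replace (l + (N - l))%nat with N by lia.
        specialize (hpow N); lia. }
    rewrite csum_block, csum_zero. apply Cmult_0_r.
    intros c hc.
    set (r := INR (z e * p ^ l) / INR (p ^ e)).
    assert (Hg : forall t, f (embedZp p (c + p ^ l * t)) =
       Cmult (Cmult (cexp2pi (INR (z e * c) / INR (p ^ e)))
                    (RtoC (powerRZ (INR p) (- dC p (embedZp p c) a l))))
             (cexp2pi (r * INR t))).
    { intro t. unfold f.
      assert (hd : dC p (embedZp p (c + p ^ l * t)) a l = dC p (embedZp p c) a l).
      { unfold dC. f_equal. f_equal. f_equal. apply meet_depth_ext.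
        intros j hj. unfold embedZp. apply mod_pow_block; auto. }
      rewrite hd.
      unfold frac_kx, embedZp.
      rewrite Nat.Div0.mul_mod_idemp_r, E_mod by auto.
      assert (INR (p ^ e) <> 0) by (apply not_0_INR; auto).
      replace (INR (z e * (c + p ^ l * t)) / INR (p ^ e)) with
        (INR (z e * c) / INR (p ^ e) + r * INR t).
      2:{ unfold r. rewrite !mult_INR, plus_INR, mult_INR. field; auto. }
      rewrite E_add. ring. }
    rewrite (csum_ext _ _ _ (fun t _ => Hg t)), csum_scal, geom. apply Cmult_0_r.
    - assert (r = INR w / INR q + INR (z e / q)).
      { unfold r, w. assert (INR q <> 0) by (apply not_0_INR; unfold q; auto).
        replace (p ^ e)%nat with (p ^ l * q)%nat.
        2:{ unfold q. rewrite <- Nat.pow_add_r. f_equal. lia. }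
        rewrite (Nat.div_mod (z e) q) at 1 by (unfold q; auto).
        rewrite !mult_INR, plus_INR, mult_INR.
        assert (INR (p ^ l) <> 0) by (apply not_0_INR; auto).
        field; auto. }
      rewrite H, E_nat. apply E_ne1; lia.
    - replace (r * INR (p ^ (N - l))) with (INR (z e * p ^ (N - e))).
      + apply E_int.
      + unfold r. assert (INR (p ^ e) <> 0) by (apply not_0_INR; auto).
        replace (p ^ (N - l))%nat with (p ^ (e - l) * p ^ (N - e))%nat.
        2:{ rewrite <- Nat.pow_add_r. f_equal. lia. }
        replace (p ^ e)%nat with (p ^ l * p ^ (e - l))%nat at 1.
        2:{ rewrite <- Nat.pow_add_r. f_equal. lia. }
        rewrite !mult_INR.
        assert (INR (p ^ l) <> 0) by (apply not_0_INR; auto).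
        assert (INR (p ^ (e - l)) <> 0) by (apply not_0_INR; auto).
        field; auto. }
  unfold phi. fold f.
  unfold haar_int_Zp.
  rewrite (Lim_seq_ext_loc _ (fun _ => 0)).
  2:{ exists e. intros N hN. rewrite Hsum by auto. reflexivity. }
  rewrite (Lim_seq_ext_loc (fun N => Im (riemann_sum p f N)) (fun _ => 0)).
  2:{ exists e. intros N hN. rewrite Hsum by auto. reflexivity. }
  rewrite Lim_seq_const. simpl. apply Cmult_0_r.
Qed.
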